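(* Let $G = H_1 \cup \dots \cup H_k$ be a finite simple graph whose connected components are $H_1,\dots,H_k$, where at most one $H_i$ is isomorphic to $K_1$ and no $H_i$ is isomorphic to $K_2$. Let $P$ be the collection of components $H_i$ with $\det'(H_i) > 0$, let $Q$ be the collection of components $H_i$ with $\det'(H_i) = 0$ (counted with multiplicity, i.e. $|Q|$ is the number of indices $i$ with $\det'(H_i)=0$), and let $R$ be the set of isomorphism classes of graphs occurring in $Q$. Then \[\det'(G) = |Q| - |R| + \sum_{H \in P} \det'(H).\]
   Context: All graphs are finite and simple. An automorphism of $G$ is a bijection $\phi: V(G)\to V(G)$ preserving adjacency and non-adjacency; $\mathrm{Aut}(G)$ is the automorphism group. An automorphism $\phi$ fixes an edge $\{u,v\}$ if $\{\phi(u),\phi(v)\}=\{u,v\}$. For a graph $G$ with at most one isolated vertex and no component isomorphic to $K_2$, an edge subset $T\subseteq E(G)$ is an edge determining set if the only $\phi\in\mathrm{Aut}(G)$ satisfying $\{\phi(u),\phi(v)\}=\{u,v\}$ for all $\{u,v\}\in T$ is the identity; the determining index $\det'(G)$ is the minimum size of an edge determining set (it is $0$ if $G$ has only the trivial automorphism). *)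

(* Defs.v *)
(* A finite simple graph is a symmetric irreflexive
   relation e : rel T on a finType T.  Subgraphs induced on a vertex set
   V : {set T} are handled directly: an automorphism of G[V] is a permutation
   of T with support in V (these correspond exactly to bijections of V)
   preserving adjacency and non-adjacency on V. *)
From mathcomp Require Import all_boot fingroup perm.
Set Implicit Arguments. Unset Strict Implicit. Unset Printing Implicit Defensive.

Section Graphs.
Variables (T : finType) (e : rel T).

Definition is_aut (V : {set T}) (s : {perm T}) : bool :=
  perm_on V s && [forall x in V, forall y in V, e (s x) (s y) == e x y].

Definition is_edge (V : {set T}) (X : {set T}) : bool :=
  [exists u in V, exists v in V, e u v && (X == [set u; v])].

Definition edge_det (V : {set T}) (S : {set {set T}}) : bool :=
  [forall X in S, is_edge V X] &&
  [forall s : {perm T},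
     (is_aut V s && [forall X in S, s @: X == X]) ==> (s == 1%g)].

(* determining index det'(G[V]): minimum size of an edge determining set
   (the default value is only reached if no edge determining set exists,
   which cannot happen under the hypotheses of the theorem) *)
Definition det_index (V : {set T}) : nat :=
  \big[minn/#|{set {set T}}|]_(S : {set {set T}} | edge_det V S) #|S|.

Definition components : {set {set T}} :=
  [set [set y | connect e x y] | x : T].

Definition induced_iso (C1 C2 : {set T}) : bool :=
  [exists f : {ffun T -> T},
    [&& [forall x in C1, forall y in C1, (f x == f y) ==> (x == y)],
        f @: C1 == C2 &
        [forall x in C1, forall y in C1, e (f x) (f y) == e x y]]].
End Graphs.

(* Main.v *)
Require Import Defs.
From mathcomp Require Import all_boot fingroup perm.
Set Implicit Arguments. Unset Strict Implicit. Unset Printing Implicit Defensive.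

Section Aux.
Variables (T : finType) (e : rel T).
Hypotheses (e_sym : symmetric e) (e_irr : irreflexive e).

Definition ccomp x := [set y | connect e x y].

Lemma csym : connect_sym e. Proof. exact: sym_connect_sym. Qed.

Lemma comp_eq x y : connect e x y -> ccomp x = ccomp y.
Proof. move=> cxy; apply/setP=> z; rewrite !inE; exact: (same_connect csym cxy). Qed.

Lemma comp_in x : x \in ccomp x. Proof. by rewrite inE connect0. Qed.

Lemma comps_comp x : ccomp x \in components e.
Proof. by apply/imsetP; exists x. Qed.

Lemma compsP C : C \in components e -> forall x, x \in C -> C = ccomp x.
Proof. by move=> /imsetP[z _ ->] x; rewrite inE => /comp_eq. Qed.

Lemma comps_nonempty C : C \in components e -> exists x, x \in C.
Proof. by move=> /imsetP[z _ ->]; exists z; exact: comp_in. Qed.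

Lemma comps_disj C D x : C \in components e -> D \in components e ->
  x \in C -> x \in D -> C = D.
Proof. by move=> hC hD xC xD; rewrite (compsP hC xC) (compsP hD xD). Qed.

Lemma edge_in C x y : C \in components e -> x \in C -> e x y -> y \in C.
Proof.
move=> hC xC exy; rewrite (compsP hC xC) inE; exact: connect1.
Qed.

Lemma edge_in' C x y : C \in components e -> y \in C -> e x y -> x \in C.
Proof. by move=> hC yC exy; apply: (edge_in hC yC); rewrite e_sym. Qed.

Lemma autTP (s : {perm T}) :
  reflect (forall x y, e (s x) (s y) = e x y) (is_aut e setT s).
Proof.
rewrite /is_aut; apply: (iffP andP) => [[_ /forallP H] x y|H].
  by have /implyP/(_ (in_setT x))/forallP/(_ y)/implyP/(_ (in_setT y))/eqP := H x.
split; first by apply/subsetP => z; rewrite in_setT.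
by apply/forallP=> x; apply/implyP=> _; apply/forallP=> y; apply/implyP=> _; rewrite H.
Qed.

Lemma aut_connect (s : {perm T}) : (forall x y, e (s x) (s y) = e x y) ->
  forall x y, connect e x y -> connect e (s x) (s y).
Proof.
move=> H x _ /connectP[p ep ->].
elim: p x ep => [|z p IH] x /=; first by rewrite connect0.
move=> /andP[exz /IH]; apply: connect_trans; apply: connect1; by rewrite H.
Qed.

Lemma aut_comp (s : {perm T}) C x : (forall x y, e (s x) (s y) = e x y) ->
  C \in components e -> x \in C -> forall y, y \in C -> s y \in ccomp (s x).
Proof.
move=> H hC xC y yC; rewrite inE; apply: aut_connect => //.
by move: yC; rewrite (compsP hC xC) inE.
Qed.

Lemma restr (s : {perm T}) (A : {set T}) : (forall x, x \in A -> s x \in A) ->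
  exists r : {perm T}, perm_on A r /\ forall x, r x = if x \in A then s x else x.
Proof.
move=> sA.
have inj : injective (fun x => if x \in A then s x else x).
  move=> x y /=; case: ifP => xA; case: ifP => yA.
  - exact: perm_inj.
  - by move=> h; move: yA; rewrite -h sA.
  - by move=> h; move: xA; rewrite h sA.
  - by [].
exists (perm inj); split=> [|x]; last by rewrite permE.
apply/subsetP=> x; rewrite inE permE; by case: ifP => //; rewrite eqxx.
Qed.

Lemma stable_back (s : {perm T}) (A : {set T}) : (forall x, x \in A -> s x \in A) ->
  forall x, s x \in A -> x \in A.
Proof.
move=> sA x sx.
have eA : s @: A = A.
  apply/eqP; rewrite eqEcard (card_imset _ perm_inj) leqnn andbT.
  by apply/subsetP => _ /imsetP[y yA ->]; apply: sA.
by rewrite -eA mem_imset in sx; last exact: perm_inj.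
Qed.

Lemma aut_ext C (r : {perm T}) : C \in components e -> perm_on C r ->
  (forall x y, x \in C -> y \in C -> e (r x) (r y) = e x y) ->
  forall x y, e (r x) (r y) = e x y.
Proof.
move=> hC pr H x y.
case xC: (x \in C); case yC: (y \in C).
- exact: H.
- rewrite (out_perm (x:=y) pr) ?yC //.
  apply/idP/idP => h; [move: (edge_in hC (etrans (perm_closed x pr) xC) h)
                       | move: (edge_in hC xC h)]; by rewrite yC.
- rewrite (out_perm pr (x:=x)) ?xC //.
  apply/idP/idP => h; [move: (edge_in' hC (etrans (perm_closed y pr) yC) h)
                       | move: (edge_in' hC yC h)]; by rewrite xC.
- by rewrite !(out_perm pr) ?xC ?yC.
Qed.


Lemma edgeP V X : is_edge e V X ->
  exists u v, [/\ u \in V, v \in V, e u v & X = [set u; v]].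
Proof.
by case/existsP=> u /andP[uV /existsP[v /andP[vV /andP[euv /eqP XE]]]]; exists u, v.
Qed.

Lemma det_le V S : edge_det e V S -> det_index e V <= #|S|.
Proof.
move=> hS; rewrite /det_index -big_filter.
have : S \in [seq i <- index_enum {set {set T}} | edge_det e V i].
  by rewrite mem_filter hS mem_index_enum.
elim: [seq _ <- _ | _] => //= i s IH; rewrite inE big_cons => /orP[/eqP <-|/IH h].
  exact: geq_minl.
exact: leq_trans (geq_minr _ _) h.
Qed.

Lemma det_attained V S0 : edge_det e V S0 ->
  exists S, edge_det e V S /\ #|S| = det_index e V.
Proof.
move=> hS0; case: (arg_minnP (fun S : {set {set T}} => #|S|) hS0) => Sm hSm minS.
exists Sm; split => //; apply/eqP; rewrite eqn_leq det_le // andbT.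
rewrite /det_index; elim/big_ind: _ => //.
- apply: leq_trans (max_card _) _.
  exact: (leq_card (fun X : {set T} => [set X]) (@set1_inj _)).
- by move=> x y hx hy; rewrite leq_min hx hy.
Qed.

Lemma iso_comp x : (forall y, e x y = false) -> ccomp x = [set x].
Proof.
move=> iso; apply/setP => y; rewrite !inE; apply/idP/idP => [cxy|/eqP->]; last exact: connect0.
have cl : closed e [set x].
  apply: (intro_closed csym) => a b eab; rewrite inE => /eqP ax.
  by rewrite ax iso in eab.
by have := closed_connect cl cxy; rewrite !inE eqxx => <-.
Qed.

Lemma all_edges_det
  (hK1 : #|[set C in components e | #|C| == 1%N]| <= 1)
  (hK2 : forall C, C \in components e -> #|C| != 2) :
  edge_det e setT [set X | is_edge e setT X].
Proof.
apply/andP; split; first by apply/forallP=> X; apply/implyP; rewrite inE.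
apply/forallP=> s; apply/implyP=> /andP[/autTP sa /forallP fx].
have fixE : forall u v, e u v -> s @: [set u; v] = [set u; v].
  move=> u v euv; apply/eqP; move/implyP: (fx [set u; v]); apply; rewrite inE.
  apply/existsP; exists u; rewrite in_setT /=; apply/existsP; exists v.
  by rewrite in_setT euv eqxx.
have img : forall u v, e u v -> s u \in [set u; v].
  by move=> u v euv; rewrite -(fixE u v euv); apply: imset_f; rewrite !inE eqxx.
have fix2 : forall a p q, e a p -> e a q -> p != q -> s a = a.
  move=> a p q eap eaq npq; have h1 := img _ _ eap; have h2 := img _ _ eaq.
  case: (eqVneq (s a) a) => // na.
  rewrite !inE (negbTE na) /= in h1 h2.
  by rewrite -(eqP h1) -(eqP h2) eqxx in npq.
have nbr : forall x u, e x u -> s x = x.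
  move=> x u exu.
  have xu : x != u by apply: contraTneq exu => ->; rewrite e_irr.
  have : [exists a in [set x; u], exists b in ~: [set x; u], e a b].
    apply: contraT => /existsPn H.
    have cl : closed e [set x; u].
      apply: (intro_closed csym) => a b eab aX; apply: contraT => bX.
      move: (H a); rewrite aX /= => /existsPn /(_ b).
      by rewrite inE bX eab.
    have cE : ccomp x = [set x; u].
      apply/setP => y; rewrite inE; apply/idP/idP.
      - by move=> cxy; have := closed_connect cl cxy; rewrite !inE eqxx => <-.
      - by rewrite !inE => /orP[]/eqP->; [exact: connect0 | exact: connect1].
    by move: (hK2 _ (comps_comp x)); rewrite cE cards2 xu.
  case/existsP => a /andP[aX /existsP[b /andP[bX eab]]].
  move: bX; rewrite !inE negb_or => /andP[bx bu].
  move: aX eab; rewrite !inE => /orP[]/eqP -> eab.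
  - by apply: (fix2 x u b exu eab); rewrite eq_sym.
  - have su : s u = u by apply: (fix2 u x b) => //; [rewrite e_sym | rewrite eq_sym].
    have := img _ _ exu; rewrite !inE => /orP[/eqP//|/eqP h].
    by have h' := perm_inj (etrans h (esym su)); rewrite h' eqxx in xu.
apply/eqP/permP => x; rewrite perm1.
case: (pickP (e x)) => [u exu | iso_x]; first exact: nbr exu.
case: (pickP (e (s x))) => [w esw | iso_y].
  by apply: perm_inj; exact: (nbr _ _ esw).
case: (eqVneq (s x) x) => // nsx.
have : [set [set x]; [set s x]] \subset [set C in components e | #|C| == 1%N].
  apply/subsetP => C; rewrite !inE => /orP[]/eqP ->.
  - by rewrite -(iso_comp iso_x) comps_comp /= (iso_comp iso_x) cards1.
  - by rewrite -(iso_comp iso_y) comps_comp /= (iso_comp iso_y) cards1.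
move/subset_leq_card; rewrite cards2.
have nx : [set x] != [set s x] by apply: contraNneq nsx => /set1_inj <-.
by rewrite nx => h; have := leq_trans h hK1.
Qed.

Lemma restr_det S C : edge_det e setT S -> C \in components e ->
  edge_det e C [set X in S | X \subset C].
Proof.
move=> /andP[/forallP Sedge /forallP Sdet] hC.
apply/andP; split.
  apply/forallP => X; apply/implyP; rewrite inE => /andP[XS XC].
  have [u [v [_ _ euv XE]]] := edgeP (implyP (Sedge X) XS).
  have uC : u \in C by apply: (subsetP XC); rewrite XE !inE eqxx.
  have vC : v \in C by apply: (subsetP XC); rewrite XE !inE eqxx orbT.
  apply/existsP; exists u; rewrite uC /=; apply/existsP; exists v.
  by rewrite vC euv XE eqxx.
apply/forallP => r; apply/implyP => /andP[/andP[pr /forallP ar'] /forallP rfix].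
have H : forall x y, x \in C -> y \in C -> e (r x) (r y) = e x y.
  move=> x y xC yC; move/implyP: (ar' x) => /(_ xC) /forallP /(_ y) /implyP /(_ yC).
  by move/eqP.
apply: (implyP (Sdet r)); apply/andP; split; first by apply/autTP; exact: aut_ext hC pr H.
apply/forallP => X; apply/implyP => XS.
case XC: (X \subset C).
  by move/implyP: (rfix X); apply; rewrite inE XS XC.
have [u [v [_ _ euv XE]]] := edgeP (implyP (Sedge X) XS).
have uC : u \notin C.
  apply/negP => uC; suff : X \subset C by rewrite XC.
  rewrite XE.
  by apply/subsetP => z; rewrite !inE => /orP[]/eqP->; rewrite ?uC ?(edge_in hC uC euv).
have vC : v \notin C.
  apply/negP => vC; move: uC; by rewrite (edge_in' hC vC euv).
by rewrite XE imsetU1 imset_set1 !(out_perm pr).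
Qed.


Lemma isoP (C D : {set T}) : induced_iso e C D -> exists f : T -> T,
  [/\ {in C &, injective f}, f @: C = D & forall x y, x \in C -> y \in C -> e (f x) (f y) = e x y].
Proof.
case/existsP => f /and3P[/forallP fi /eqP fC /forallP fe]; exists f; split => //.
- move=> x y xC yC fxy; move/implyP: (fi x) => /(_ xC) /forallP /(_ y) /implyP /(_ yC).
  by rewrite fxy eqxx => /implyP /(_ isT) /eqP.
- move=> x y xC yC; move/implyP: (fe x) => /(_ xC) /forallP /(_ y) /implyP /(_ yC).
  by move/eqP.
Qed.

Lemma isoI (C D : {set T}) (f : T -> T) : {in C &, injective f} -> f @: C = D ->
  (forall x y, x \in C -> y \in C -> e (f x) (f y) = e x y) -> induced_iso e C D.
Proof.
move=> fi fC fe; apply/existsP; exists [ffun x => f x]; apply/and3P; split.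
- apply/forallP => x; apply/implyP => xC; apply/forallP => y; apply/implyP => yC.
  by rewrite !ffunE; apply/implyP => /eqP /fi -> //.
- by apply/eqP; rewrite -fC; apply: eq_imset => x; rewrite ffunE.
- apply/forallP => x; apply/implyP => xC; apply/forallP => y; apply/implyP => yC.
  by rewrite !ffunE fe.
Qed.

Lemma iso_refl C : induced_iso e C C.
Proof. by apply: (@isoI _ _ id) => //; rewrite imset_id. Qed.

Lemma iso_inv (C D : {set T}) (f : T -> T) : {in C &, injective f} -> f @: C = D ->
  (forall x y, x \in C -> y \in C -> e (f x) (f y) = e x y) ->
  exists h : T -> T, [/\ {in D &, injective h}, h @: D = C,
     forall x y, x \in D -> y \in D -> e (h x) (h y) = e x y,
     forall y, y \in D -> h y \in C & forall y, y \in D -> f (h y) = y].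
Proof.
move=> fi fC fe.
pose h y := odflt y [pick x in C | f x == y].
have hE : forall y, y \in D -> h y \in C /\ f (h y) = y.
  move=> y; rewrite -fC => /imsetP[x xC ->]; rewrite /h.
  case: pickP => [z /andP[zC /eqP fz] | /(_ x)]; last by rewrite xC eqxx.
  by rewrite fz.
have hi : {in D &, injective h}.
  by move=> y y' yD y'D hyy; rewrite -(hE _ yD).2 -(hE _ y'D).2 hyy.
exists h; split.
- exact: hi.
- apply/eqP; rewrite eqEsubset; apply/andP; split.
    by apply/subsetP => _ /imsetP[y yD ->]; exact: (hE _ yD).1.
  apply/subsetP => x xC; have fxD : f x \in D by rewrite -fC imset_f.
  apply/imsetP; exists (f x) => //; apply: fi => //; first exact: (hE _ fxD).1.
  by rewrite (hE _ fxD).2.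
- move=> x y xD yD; rewrite -(fe _ _ (hE _ xD).1 (hE _ yD).1).
  by rewrite (hE _ xD).2 (hE _ yD).2.
- by move=> y yD; exact: (hE _ yD).1.
- by move=> y yD; exact: (hE _ yD).2.
Qed.


Lemma iso_sym C D : induced_iso e C D -> induced_iso e D C.
Proof.
case/isoP => f [fi fC fe]; have [h [hi hD he _ _]] := iso_inv fi fC fe.
exact: isoI hi hD he.
Qed.

Lemma iso_trans C D E : induced_iso e C D -> induced_iso e D E -> induced_iso e C E.
Proof.
case/isoP => f [fi fC fe]; case/isoP => g [gi gD ge].
have fin : forall x, x \in C -> f x \in D by move=> x xC; rewrite -fC imset_f.
apply: (@isoI _ _ (g \o f)).
- by move=> x y xC yC /= /gi h; apply: fi => //; apply: h; apply: fin.
- by rewrite imset_comp fC.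
- by move=> x y xC yC /=; rewrite ge ?fin // fe.
Qed.

Lemma sum_card (I : finType) (A : {set I}) (p : pred I) :
  \sum_(i in A) (p i : nat) = #|[set i in A | p i]|.
Proof.
rewrite -sum1_card big_mkcond [RHS]big_mkcond /=; apply: eq_bigr => i _.
by rewrite !inE; case: (i \in A); case: (p i).
Qed.


Lemma ne_edge A B a b : A \in components e -> B \in components e -> A != B ->
  a \in A -> b \in B -> e a b = false.
Proof.
move=> hA hB nAB aA bB; apply/negbTE/negP => eab.
by move: nAB; rewrite (comps_disj hA hB (edge_in hA aA eab) bB) eqxx.
Qed.

Lemma stab_edge (s : {perm T}) C X : (forall x y, e (s x) (s y) = e x y) ->
  C \in components e -> is_edge e C X -> s @: X = X -> forall y, y \in C -> s y \in C.
Proof.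
move=> H hC /edgeP[u [v [uC vC euv XE]]] sX y yC.
have su : s u \in C.
  have : s u \in s @: X by rewrite imset_f // XE !inE eqxx.
  by rewrite sX XE !inE => /orP[]/eqP->.
have := aut_comp H hC uC yC; by rewrite -(compsP hC su).
Qed.

Lemma fix_comp (s : {perm T}) C S' : (forall x y, e (s x) (s y) = e x y) ->
  C \in components e -> (forall y, y \in C -> s y \in C) -> edge_det e C S' ->
  (forall X, X \in S' -> s @: X = X) -> forall y, y \in C -> s y = y.
Proof.
move=> H hC sC /andP[/forallP Se /forallP Sd] sX y yC.
have [r [pr rE]] := restr sC.
have r1 : r = 1%g.
  apply/eqP; apply: (implyP (Sd r)); apply/andP; split.
    apply/andP; split => //; apply/forallP => a; apply/implyP => aC.
    apply/forallP => b; apply/implyP => bC; by rewrite !rE aC bC H.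
  apply/forallP => X; apply/implyP => XS.
  have /edgeP[u [v [uC vC _ XE]]] := implyP (Se X) XS.
  rewrite -{2}(sX X XS); apply/eqP; apply: eq_in_imset => z.
  by rewrite XE rE !inE => /orP[]/eqP->; rewrite ?uC ?vC.
by have := rE y; rewrite r1 perm1 yC => <-.
Qed.

Lemma edge_T V X : is_edge e V X -> is_edge e setT X.
Proof.
case/edgeP => u [v [_ _ euv XE]]; apply/existsP; exists u; rewrite in_setT /=.
by apply/existsP; exists v; rewrite in_setT euv XE eqxx.
Qed.

Lemma autV (s : {perm T}) : (forall x y, e (s x) (s y) = e x y) ->
  forall x y, e ((s^-1)%g x) ((s^-1)%g y) = e x y.
Proof. by move=> H x y; rewrite -H !permKV. Qed.

Lemma swap_aut C D : C \in components e -> D \in components e -> C != D ->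
  induced_iso e C D -> exists g : {perm T}, [/\ forall x y, e (g x) (g y) = e x y,
    forall x, x \in C -> g x \in D & forall x, x \notin C -> x \notin D -> g x = x].
Proof.
move=> hC hD nCD /isoP[f [fi fC fe]].
have [h [hi hD' he hin _]] := iso_inv fi fC fe.
have fin : forall x, x \in C -> f x \in D by move=> x xC; rewrite -fC imset_f.
have dCD : forall x, x \in C -> x \in D -> False.
  by move=> x xC xD; move: nCD; rewrite (comps_disj hC hD xC xD) eqxx.
pose g x := if x \in C then f x else if x \in D then h x else x.
have gi : injective g.
  move=> x y; rewrite /g.
  case xC: (x \in C); case yC: (y \in C); case xD: (x \in D); case yD: (y \in D) => //=;
  try (by move=> gxy; move: (fin _ xC); rewrite gxy => /dCD; apply; rewrite ?hin ?fin);
  try (by move=> gxy; move: (fin _ yC); rewrite -gxy => /dCD; apply; rewrite ?hin ?fin);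
  try (by move=> gxy; apply: fi);
  try (by move=> gxy; apply: hi);
  try (by move=> gxy; exfalso; apply: (dCD x));
  try (by move=> gxy; exfalso; apply: (dCD y)).
  - by move=> gxy; exfalso; apply: (dCD (h y)); rewrite ?hin // -gxy fin.
  - by move=> gxy; move: (fin _ xC); rewrite gxy yD.
  - by move=> gxy; exfalso; apply: (dCD (h x)); rewrite ?hin // gxy fin.
  - by move=> gxy; move: (fin _ yC); rewrite -gxy xD.
  - by move=> gxy; move: (hin _ xD); rewrite gxy yC.
  - by move=> gxy; move: (hin _ yD); rewrite -gxy xC.
have nC : forall z, z \notin C -> ccomp z != C.
  by move=> z zC; apply: contraNneq zC => <-; exact: comp_in.
have nD : forall z, z \notin D -> ccomp z != D.
  by move=> z zD; apply: contraNneq zD => <-; exact: comp_in.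
have nDC : D != C by rewrite eq_sym.
exists (perm gi); split => [x y|x xC|x xC xD]; rewrite !permE /g; last first.
- by rewrite (negbTE xC) (negbTE xD).
- by rewrite xC fin.
case xC: (x \in C); case yC: (y \in C).
- exact: fe.
- case yD: (y \in D).
  + by rewrite (ne_edge hD hC nDC (fin _ xC) (hin _ yD)) (ne_edge hC hD nCD xC yD).
  + have nyC : y \notin C by rewrite yC.
    have nyD : y \notin D by rewrite yD.
    rewrite (ne_edge hD (comps_comp y) _ (fin _ xC) (comp_in y)) 1?eq_sym ?nD //.
    by rewrite (ne_edge hC (comps_comp y) _ xC (comp_in y)) // eq_sym nC.
- case xD: (x \in D).
  + by rewrite (ne_edge hC hD nCD (hin _ xD) (fin _ yC)) (ne_edge hD hC nDC xD yC).
  + have nxC : x \notin C by rewrite xC.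
    have nxD : x \notin D by rewrite xD.
    rewrite (ne_edge (comps_comp x) hD _ (comp_in x) (fin _ yC)) ?nD //.
    by rewrite (ne_edge (comps_comp x) hC _ (comp_in x) yC) ?nC.
- case xD: (x \in D); case yD: (y \in D).
  + by apply: he.
  + have nyC : y \notin C by rewrite yC.
    have nyD : y \notin D by rewrite yD.
    rewrite (ne_edge hC (comps_comp y) _ (hin _ xD) (comp_in y)) 1?eq_sym ?nC //.
    by rewrite (ne_edge hD (comps_comp y) _ xD (comp_in y)) // eq_sym nD.
  + have nxC : x \notin C by rewrite xC.
    have nxD : x \notin D by rewrite xD.
    rewrite (ne_edge (comps_comp x) hC _ (comp_in x) (hin _ yD)) ?nC //.
    by rewrite (ne_edge (comps_comp x) hD _ (comp_in x) yD) ?nD.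
  + by [].
Qed.


End Aux.
Lemma card_bigcup_le (I U : finType) (A : {set I}) (F : I -> {set U}) :
  #|\bigcup_(i in A) F i| <= \sum_(i in A) #|F i|.
Proof.
elim/big_rec2: _ => [|i n U0 _ h]; first by rewrite cards0.
by rewrite cardsU; apply: leq_trans (leq_subr _ _) _; exact: leq_add.
Qed.

Section Main.
Variables (T : finType) (e : rel T).
Hypotheses (e_sym : symmetric e) (e_irr : irreflexive e)
  (hK1 : #|[set C in components e | #|C| == 1%N]| <= 1)
  (hK2 : forall C, C \in components e -> #|C| != 2).

Local Notation comps := (components e).
Local Notation P := [set C in components e | 0 < det_index e C].
Local Notation Q := [set C in components e | det_index e C == 0%N].
Local Notation cls C := [set D in Q | induced_iso e C D].
Local Notation R := [set cls C | C in Q].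

Lemma lower S : edge_det e setT S ->
  #|Q| - #|R| + \sum_(H in P) det_index e H <= #|S|.
Proof.
move=> hS.
pose SC (C : {set T}) := [set X in S | X \subset C].
have hSC : forall C, C \in comps -> det_index e C <= #|SC C|.
  by move=> C hC; apply: det_le; exact: restr_det.
have Sedge : forall X, X \in S -> is_edge e setT X.
  by move=> X XS; move/andP: hS => [/forallP /(_ X) /implyP /(_ XS) //].
have sumle : \sum_(C in comps) #|SC C| <= #|S|.
  have eq1 : forall C, #|SC C| = \sum_(X in S) (X \subset C : nat).
    by move=> C; rewrite sum_card.
  rewrite (eq_bigr _ (fun C _ => eq1 C)) exchange_big /= -sum1_card.
  apply: leq_sum => X XS; rewrite sum_card.
  have [u [v [_ _ euv XE]]] := edgeP (Sedge X XS).
  rewrite -(cards1 (ccomp e u)); apply: subset_leq_card; apply/subsetP => C.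
  rewrite !inE => /andP[hC XC]; apply/eqP; apply: (compsP e_sym) => //.
  by apply: (subsetP XC); rewrite XE !inE eqxx.
have split : \sum_(C in comps) #|SC C| =
    \sum_(C in P) #|SC C| + \sum_(C in Q) #|SC C|.
  rewrite (bigID (fun C => 0 < det_index e C)) /=; congr (_ + _); apply: eq_bigl => C.
    by rewrite !inE.
  by rewrite !inE lt0n negbK.
have hP : \sum_(H in P) det_index e H <= \sum_(C in P) #|SC C|.
  by apply: leq_sum => C; rewrite inE => /andP[hC _]; exact: hSC.
have hQ : #|Q| - #|R| <= \sum_(C in Q) #|SC C|.
  pose Q0 := [set C in Q | SC C == set0].
  have h1 : #|Q| <= \sum_(C in Q) #|SC C| + #|Q0|.
    rewrite -sum1_card /Q0 -(sum_card _ (fun C => SC C == set0)) -big_split /=.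
    apply: leq_sum => C _; case: eqP => [->|/eqP]; first by rewrite cards0.
    by rewrite -card_gt0 addn0.
  have h2 : #|Q0| <= #|R|.
    rewrite -(@card_in_imset _ _ (fun C => cls C) Q0).
      by apply: subset_leq_card; apply: imsetS; apply/subsetP => C; rewrite /Q0 inE => /andP[].
    move=> C D; rewrite /Q0 inE => /andP[CQ /eqP C0]; rewrite inE => /andP[DQ /eqP D0] cCD.
    case: (eqVneq C D) => // nCD; exfalso.
    move: (CQ) (DQ); rewrite !inE => /andP[hC _] /andP[hD _].
    have iCD : induced_iso e C D.
      have : D \in cls D by rewrite inE DQ iso_refl.
      by rewrite -cCD inE => /andP[].
    have [g [ga gC gout]] := swap_aut e_sym hC hD nCD iCD.
    have g1 : g = 1%g.
      apply/eqP; move/andP: hS => [_ /forallP /(_ g) /implyP]; apply; apply/andP; split.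
        by apply/autTP.
      apply/forallP => X; apply/implyP => XS.
      have [u [v [_ _ euv XE]]] := edgeP (Sedge X XS).
      have outA : forall A, A \in comps -> SC A = set0 -> u \notin A /\ v \notin A.
        move=> A hA A0.
        suff uA : u \notin A.
          by split => //; apply: contra uA => vA; apply: (edge_in' e_sym hA vA euv).
        apply/negP => uA; have : X \in SC A.
          rewrite inE XS XE; apply/subsetP => z; rewrite !inE => /orP[]/eqP->//.
          exact: (edge_in e_sym hA uA euv).
        by rewrite A0 inE.
      have [uC vC] := outA C hC C0; have [uD vD] := outA D hD D0.
      by rewrite XE imsetU1 imset_set1 !gout.
    have [x xC] := comps_nonempty hC.
    have := gC x xC; rewrite g1 perm1 => xD.
    by move: nCD; rewrite (comps_disj e_sym hC hD xC xD) eqxx.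
  rewrite leq_subLR; apply: leq_trans h1 _; rewrite addnC; exact: leq_add.
apply: leq_trans sumle; rewrite split addnC; exact: leq_add.
Qed.


Lemma upper : exists2 S, edge_det e setT S &
  #|S| <= #|Q| - #|R| + \sum_(H in P) det_index e H.
Proof.
have hT := all_edges_det e_sym e_irr hK1 hK2.
have compdet : forall C, C \in comps ->
    exists S, edge_det e C S /\ #|S| = det_index e C.
  by move=> C hC; exact: (det_attained (restr_det e_sym hT hC)).
pose SC (C : {set T}) :=
  odflt set0 [pick S | edge_det e C S && (#|S| == det_index e C)].
have SCP : forall C, C \in comps -> edge_det e C (SC C) /\ #|SC C| = det_index e C.
  move=> C hC; rewrite /SC; case: pickP => [S /andP[h1 /eqP h2] //|none].
  have [S [h1 h2]] := compdet C hC; by move: (none S); rewrite h1 h2 eqxx.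
pose rep (r : {set {set T}}) := odflt set0 [pick C in Q | cls C == r].
have repP : forall r, r \in R -> rep r \in Q /\ cls (rep r) = r.
  move=> r /imsetP[C CQ ->]; rewrite /rep; case: pickP => [D /andP[DQ /eqP cD] //|none].
  by move: (none C); rewrite CQ eqxx.
pose Q1 := rep @: R.
have Q1Q : Q1 \subset Q.
  by apply/subsetP => _ /imsetP[r rR ->]; exact: (repP r rR).1.
have cQ1 : #|Q1| = #|R|.
  apply: card_in_imset => r r' rR r'R h.
  by rewrite -(repP r rR).2 -(repP r' r'R).2 h.
have clsE : forall C D, induced_iso e C D -> cls C = cls D.
  move=> C D iCD; apply/setP => D'; rewrite !inE.
  apply/andP/andP => [[h1 h2]|[h1 h2]]; split => //.
    exact: iso_trans (iso_sym iCD) h2.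
  exact: iso_trans iCD h2.
have Q1rep : forall C, C \in Q1 -> rep (cls C) = C.
  by move=> _ /imsetP[r rR ->]; rewrite (repP r rR).2.
have Q1iso : forall C D, C \in Q1 -> D \in Q1 -> induced_iso e C D -> C = D.
  by move=> C D CQ DQ iCD; rewrite -(Q1rep C CQ) -(Q1rep D DQ) (clsE C D iCD).
pose pe (C : {set T}) := odflt set0 [pick X | is_edge e C X].
have peP : forall C, C \in Q :\: Q1 -> is_edge e C (pe C).
  move=> C CQQ.
  suff [X hX] : exists X, is_edge e C X.
    by rewrite /pe; case: pickP => [Y //|none]; move: (none X); rewrite hX.
  move: CQQ; rewrite inE => /andP[nQ1 CQ].
  have hC : C \in comps by move: CQ; rewrite inE => /andP[].
  have [x xC] := comps_nonempty hC.
  case: (pickP (e x)) => [u exu | iso_x].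
    exists [set x; u]; apply/existsP; exists x; rewrite xC /=; apply/existsP; exists u.
    by rewrite (edge_in e_sym hC xC exu) exu eqxx.
  exfalso.
  have C1 : C = [set x] by rewrite (compsP e_sym hC xC) (iso_comp e_sym iso_x).
  have rR : cls C \in R by apply: imset_f.
  have [DQ cD] := repP _ rR.
  set D := rep (cls C) in DQ cD.
  have DQ1 : D \in Q1 by apply: imset_f.
  have nCD : C != D by apply: contraNneq nQ1 => ->.
  have iCD : induced_iso e C D.
    have : D \in cls D by rewrite inE DQ iso_refl.
    by rewrite cD inE => /andP[].
  have hD : D \in comps by move: DQ; rewrite inE => /andP[].
  have [f [_ fC _]] := isoP iCD.
  have D1 : #|D| == 1%N.
    rewrite eqn_leq; apply/andP; split.
      by rewrite -fC; apply: leq_trans (leq_imset_card _ _) _; rewrite C1 cards1.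
    by have [y yD] := comps_nonempty hD; apply/card_gt0P; exists y.
  have : [set C; D] \subset [set C in components e | #|C| == 1%N].
    apply/subsetP => A; rewrite !inE => /orP[]/eqP ->.
    - by rewrite hC C1 cards1.
    - by rewrite hD D1.
  by move/subset_leq_card; rewrite cards2 nCD => h; have := leq_trans h hK1.
pose S := (\bigcup_(C in P) SC C) :|: (pe @: (Q :\: Q1)).
have SP : forall C X, C \in P -> X \in SC C -> X \in S.
  by move=> C X CP XS; rewrite inE; apply/orP; left; apply/bigcupP; exists C.
have PP : forall C, C \in P -> C \in comps by move=> C; rewrite inE => /andP[].
exists S.
  apply/andP; split.
    apply/forallP => X; apply/implyP; rewrite inE => /orP[/bigcupP[C CP XS]|/imsetP[C CQ ->]].
      have [/andP[/forallP h _] _] := SCP C (PP C CP).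
      exact: edge_T (implyP (h X) XS).
    exact: edge_T (peP C CQ).
  apply/forallP => s; apply/implyP => /andP[/autTP H /forallP fx].
  have fX : forall X, X \in S -> s @: X = X by move=> X XS; apply/eqP; exact: (implyP (fx X) XS).
  have stab : forall C, C \in comps -> C \notin Q1 -> forall y, y \in C -> s y \in C.
    move=> C hC nQ1; case CP: (0 < det_index e C).
      have CP' : C \in P by rewrite inE hC CP.
      have [hS cS] := SCP C hC.
      have [X XS] : exists X, X \in SC C by apply/card_gt0P; rewrite cS.
      apply: (stab_edge e_sym H hC _ (fX X (SP C X CP' XS))).
      by move/andP: hS => [/forallP /(_ X) /implyP /(_ XS)].
    have CQQ : C \in Q :\: Q1 by rewrite !inE nQ1 hC eqn0Ngt CP.
    apply: (stab_edge e_sym H hC (peP C CQQ)); apply: fX.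
    by rewrite inE; apply/orP; right; apply: imset_f.
  have stab1 : forall C, C \in Q1 -> forall y, y \in C -> s y \in C.
    move=> C CQ1 y yC.
    have hC : C \in comps by move: (subsetP Q1Q C CQ1); rewrite inE => /andP[].
    suff <- : ccomp e (s y) = C by apply: comp_in.
    have hD := comps_comp e (s y).
    case DQ1: (ccomp e (s y) \in Q1).
      apply: esym; apply: Q1iso => //.
      apply: (@isoI _ _ _ _ s) => //; first by move=> a b _ _; exact: perm_inj.
      apply/eqP; rewrite eqEsubset; apply/andP; split.
        by apply/subsetP => _ /imsetP[z zC ->]; exact: (@aut_comp _ _ e_sym s C y H hC yC z zC).
      apply/subsetP => z zD.
      have := aut_comp e_sym (autV H) hD (comp_in e (s y)) zD.
      rewrite permK -(compsP e_sym hC yC) => iz.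
      by apply/imsetP; exists ((s^-1)%g z); rewrite ?permKV.
    have sD := stab _ hD (negbT DQ1).
    have yD := stable_back sD (comp_in e (s y)).
    exact: (@comps_disj _ _ e_sym _ _ y hD hC yD yC).
  apply/eqP/permP => x; rewrite perm1.
  have hC := comps_comp e x.
  have sC : forall y, y \in ccomp e x -> s y \in ccomp e x.
    by case Q1x: (ccomp e x \in Q1); [apply: stab1 | apply: stab => //; rewrite Q1x].
  have [hS cS] := SCP _ hC.
  case CP: (0 < det_index e (ccomp e x)).
    apply: (@fix_comp _ _ s (ccomp e x) (SC (ccomp e x)) H hC sC hS _ x (comp_in e x)) => X XS.
    by apply: fX; apply: (SP (ccomp e x)) => //; rewrite inE hC CP.
  have S0 : SC (ccomp e x) = set0 by apply: cards0_eq; rewrite cS; apply/eqP; rewrite eqn0Ngt CP.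
  rewrite S0 in hS.
  by apply: (@fix_comp _ _ s (ccomp e x) set0 H hC sC hS _ x (comp_in e x)) => X; rewrite inE.
rewrite addnC; apply: leq_trans (_ : _ <= \sum_(C in P) #|SC C| + #|Q :\: Q1|) _.
  rewrite cardsU; apply: leq_trans (leq_subr _ _) _.
  apply: leq_add; first exact: card_bigcup_le.
  exact: leq_imset_card.
apply: leq_add.
  by apply: eq_leq; apply: eq_bigr => C CP; exact: (SCP C (PP C CP)).2.
by rewrite cardsD (setIidPr Q1Q) cQ1.
Qed.

End Main.

Theorem lemma1 (T : finType) (e : rel T)
  (e_sym : symmetric e) (e_irr : irreflexive e)
  (* at most one component isomorphic to K1 *)
  (hK1 : #|[set C in components e | #|C| == 1%N]| <= 1)
  (* no component isomorphic to K2 *)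
  (hK2 : forall C, C \in components e -> #|C| != 2) :
  let P := [set C in components e | 0 < det_index e C] in
  let Q := [set C in components e | det_index e C == 0%N] in
  let R := [set [set D in Q | induced_iso e C D] | C in Q] in
  det_index e [set: T] = (#|Q| - #|R| + \sum_(H in P) det_index e H)%N.
Proof.
move=> P Q R.
have hT := all_edges_det e_sym e_irr hK1 hK2.
apply/eqP; rewrite eqn_leq; apply/andP; split.
  have [S hS cS] := upper e_sym e_irr hK1 hK2.
  exact: leq_trans (det_le hS) cS.
have [S [hS cS]] := det_attained hT.
by rewrite -cS; exact: (@lower T e e_sym S hS).
Qed.
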